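(* Let $n\ge 1$, $\nu>0$, let $M\in\mathbb{R}^{n\times n}$ be diagonal with positive diagonal entries, let $L\in\mathbb{R}^{n\times n}$ be nonsingular, and let $\Pi_k$ be an $n\times n$ diagonal matrix with diagonal entries in $\{0,1\}$. For $\alpha_u,\alpha_y\ge0$ with $\max\{\alpha_u,\alpha_y\}>0$ set $\gamma_1=\frac{\alpha_y^2\nu}{\alpha_y^2\nu+\alpha_u^2}$, $\gamma_2=\frac{\alpha_u^2}{\alpha_y^2\nu+\alpha_u^2}$, $$\mathbb{S}_k=\nu LM^{-1}L^T+M-\frac{1}{\alpha_y^2\nu+\alpha_u^2}(\alpha_y\nu LM^{-1}-\alpha_u I)\Pi_k M\Pi_k(\alpha_y\nu LM^{-1}-\alpha_u I)^T,$$ $L_1=\sqrt{\nu}L(I-\gamma_1\Pi_k)^{1/2}+(I-\gamma_2\Pi_k)^{1/2}M$, $\widehat{\mathbb{S}}_k=L_1M^{-1}L_1^T$, assumed nonsingular. Let $\lambda$ be an eigenvalue of $\widehat{\mathbb{S}}_k^{-1}\mathbb{S}_k$. Then in the two cases below $$\lambda\le\zeta^2+(1+\zeta)^2,$$ where: (i) if $(\alpha_u,\alpha_y)=(1,0)$, then $\zeta=\big\|M^{1/2}\big(\sqrt{\nu}L+M(I-\Pi_k)\big)^{-1}\sqrt{\nu}LM^{-1/2}\big\|$; moreover, if $L+L^T$ is positive definite, then (with $M,L,\Pi_k$ fixed) $\zeta$ is bounded, as $\nu\to0$, by a constant independent of $\nu$; (ii) if $(\alpha_u,\alpha_y)=(0,1)$,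 then $\zeta=\big\|\big(I+\sqrt{\nu}M^{-1/2}LM^{-1/2}(I-\Pi_k)\big)^{-1}\big\|$; moreover $\zeta\to1$ as $\nu\to0$.
   Context: $\|\cdot\|$ is the spectral norm. Square roots of nonnegative diagonal matrices are taken entrywise. Case (i) corresponds to control constraints and case (ii) to state constraints. *)

(* Defs.v *)
From HB Require Import structures.
From mathcomp Require Import all_boot all_order all_algebra.
From mathcomp Require Import all_classical all_reals all_analysis.
Set Implicit Arguments. Unset Strict Implicit. Unset Printing Implicit Defensive.
Import Order.TTheory GRing.Theory Num.Theory.
Local Open Scope ring_scope.
Local Open Scope classical_set_scope.

Section Defs.
Variable R : realType.
Variable n : nat.

Definition vnorm (x : 'cV[R]_n) : R := Num.sqrt (\sum_i (x i 0) ^+ 2).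

Definition spnorm (A : 'M[R]_n) : R :=
  sup [set vnorm (A *m x) | x in [set x : 'cV[R]_n | vnorm x <= 1]].

(* entrywise square root; for nonnegative diagonal matrices this is the
   matrix square root *)
Definition msqrt (A : 'M[R]_n) : 'M[R]_n := \matrix_(i, j) Num.sqrt (A i j).

Definition posdef (A : 'M[R]_n) : Prop :=
  forall x : 'cV[R]_n, x != 0 -> 0 < (x^T *m A *m x) 0 0.

Definition gamma1 (nu au ay : R) : R := ay ^+ 2 * nu / (ay ^+ 2 * nu + au ^+ 2).
Definition gamma2 (nu au ay : R) : R := au ^+ 2 / (ay ^+ 2 * nu + au ^+ 2).

Definition Sk (nu : R) (M L Pi : 'M[R]_n) (au ay : R) : 'M[R]_n :=
  let B := (ay * nu) *: (L *m invmx M) - au%:M in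
  nu *: (L *m invmx M *m L^T) + M
  - (ay ^+ 2 * nu + au ^+ 2)^-1 *: (B *m Pi *m M *m Pi *m B^T).

Definition L1 (nu : R) (M L Pi : 'M[R]_n) (au ay : R) : 'M[R]_n :=
  Num.sqrt nu *: L *m msqrt (1%:M - gamma1 nu au ay *: Pi)
  + msqrt (1%:M - gamma2 nu au ay *: Pi) *m M.

Definition Shat (nu : R) (M L Pi : 'M[R]_n) (au ay : R) : 'M[R]_n :=
  L1 nu M L Pi au ay *m invmx M *m (L1 nu M L Pi au ay)^T.

Definition zeta1 (nu : R) (M L Pi : 'M[R]_n) : R :=
  spnorm (msqrt M *m invmx (Num.sqrt nu *: L + M *m (1%:M - Pi))
          *m (Num.sqrt nu *: L) *m invmx (msqrt M)).

Definition zeta2 (nu : R) (M L Pi : 'M[R]_n) : R :=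
  spnorm (invmx (1%:M + Num.sqrt nu *: (invmx (msqrt M) *m L *m invmx (msqrt M))
                       *m (1%:M - Pi))).
End Defs.

(* Main.v *)
Require Import Defs.
From HB Require Import structures.
From mathcomp Require Import all_boot all_order all_algebra.
From mathcomp Require Import all_classical all_reals all_analysis.
From mathcomp Require Import ring lra.
Import Order.TTheory GRing.Theory Num.Theory.
Import numFieldNormedType.Exports.
Local Open Scope ring_scope.
Local Open Scope classical_set_scope.

Set Implicit Arguments. Unset Strict Implicit. Unset Printing Implicit Defensive.


Lemma sq_le_aux (R : realType) (u v : R) : 0 <= v -> u ^+ 2 <= v ^+ 2 -> u <= v.
Proof. move=> v0 h; case: (lerP u v) => // uv; nra. Qed.

Lemma abs_le_sq (R : realType) (t u : R) : `|t| <= u -> t ^+ 2 <= u ^+ 2.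
Proof. move=> h; have := h; rewrite ler_norml => /andP[h1 h2]; nra. Qed.

Section Vec.
Variable R : realType.
Variable n : nat.
Implicit Types (x y z : 'cV[R]_n) (A B : 'M[R]_n).

Definition dot x y : R := (x^T *m y) 0 0.
Definition nsq x : R := dot x x.

Lemma dotE x y : dot x y = \sum_i x i 0 * y i 0.
Proof. by rewrite /dot mxE; apply: eq_bigr => i _; rewrite mxE. Qed.

Lemma dotC x y : dot x y = dot y x.
Proof. rewrite !dotE; apply: eq_bigr => i _; exact: mulrC. Qed.

Lemma dotDl x y z : dot (x + y) z = dot x z + dot y z.
Proof. by rewrite /dot linearD /= mulmxDl mxE. Qed.
Lemma dotZl (c : R) x y : dot (c *: x) y = c * dot x y.
Proof. by rewrite /dot linearZ /= -scalemxAl mxE. Qed.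
Lemma dotNl x y : dot (- x) y = - dot x y.
Proof. by rewrite -scaleN1r dotZl mulN1r. Qed.
Lemma dotDr x y z : dot z (x + y) = dot z x + dot z y.
Proof. by rewrite dotC dotDl !(dotC z). Qed.
Lemma dotZr (c : R) x y : dot y (c *: x) = c * dot y x.
Proof. by rewrite dotC dotZl dotC. Qed.
Lemma dotNr x y : dot y (- x) = - dot y x.
Proof. by rewrite dotC dotNl dotC. Qed.
Lemma dot0l y : dot 0 y = 0.
Proof. by rewrite -(scale0r (0 : 'cV[R]_n)) dotZl mul0r. Qed.
Lemma dot0r y : dot y 0 = 0.
Proof. by rewrite dotC dot0l. Qed.
Lemma dot_mull A x y : dot (A *m x) y = dot x (A^T *m y).
Proof. by rewrite /dot trmx_mul mulmxA. Qed.

Lemma nsqE x : nsq x = \sum_i x i 0 ^+ 2.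
Proof. by rewrite /nsq dotE; apply: eq_bigr => i _; rewrite expr2. Qed.
Lemma nsq_ge0 x : 0 <= nsq x.
Proof. by rewrite nsqE sumr_ge0 // => i _; rewrite sqr_ge0. Qed.
Lemma vnormE x : vnorm x = Num.sqrt (nsq x).
Proof. by rewrite nsqE. Qed.
Lemma vnorm_ge0 x : 0 <= vnorm x.
Proof. by rewrite vnormE sqrtr_ge0. Qed.
Lemma sqr_vnorm x : vnorm x ^+ 2 = nsq x.
Proof. by rewrite vnormE sqr_sqrtr // nsq_ge0. Qed.
Lemma nsq_eq0 x : nsq x = 0 -> x = 0.
Proof.
rewrite nsqE => H; apply/matrixP => i j; rewrite (ord1 j) mxE; apply/eqP.
rewrite -sqrf_eq0; apply/eqP.
exact: (psumr_eq0P (fun i _ => sqr_ge0 (x i 0)) H).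
Qed.
Lemma vnorm_eq0 x : vnorm x = 0 -> x = 0.
Proof. by move=> h; apply: nsq_eq0; rewrite -sqr_vnorm h expr0n. Qed.
Lemma nsq0 : nsq (0 : 'cV[R]_n) = 0.
Proof. by rewrite /nsq dot0l. Qed.
Lemma vnorm0 : vnorm (0 : 'cV[R]_n) = 0.
Proof. by rewrite vnormE nsq0 sqrtr0. Qed.
Lemma nsq_gt0 x : x != 0 -> 0 < nsq x.
Proof.
move=> x0; rewrite lt_def nsq_ge0 andbT; apply/eqP => h.
by move: x0; rewrite (nsq_eq0 h) eqxx.
Qed.

Lemma CS x y : dot x y <= vnorm x * vnorm y.
Proof.
have ha := vnorm_ge0 x; have hb := vnorm_ge0 y.
have [a0|apos] := eqVneq (vnorm x) 0.
  by rewrite (vnorm_eq0 a0) dot0l vnorm0 mul0r.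
have [b0|bpos] := eqVneq (vnorm y) 0.
  by rewrite (vnorm_eq0 b0) dot0r vnorm0 mulr0.
have H := nsq_ge0 (vnorm y *: x - vnorm x *: y).
move: H; rewrite /nsq !(dotDl, dotDr, dotNl, dotNr, dotZl, dotZr).
rewrite (dotC y x) -/(nsq x) -/(nsq y) -!sqr_vnorm => H.
have ap : 0 < vnorm x by rewrite lt_def apos.
have bp : 0 < vnorm y by rewrite lt_def bpos.
have abp : 0 < vnorm x * vnorm y by rewrite mulr_gt0.
nra.
Qed.

Lemma nsqD x y : nsq (x + y) = nsq x + 2 * dot x y + nsq y.
Proof. rewrite /nsq !(dotDl, dotDr) (dotC y x); ring. Qed.

Lemma vnormD x y : vnorm (x + y) <= vnorm x + vnorm y.
Proof.
apply: sq_le_aux; first by rewrite addr_ge0 ?vnorm_ge0.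
rewrite sqr_vnorm nsqD -!sqr_vnorm; have := CS x y; nra.
Qed.

Lemma vnormZ (c : R) x : vnorm (c *: x) = `|c| * vnorm x.
Proof.
rewrite !vnormE /nsq dotZl dotZr mulrA -expr2 sqrtrM ?sqr_ge0 //.
by rewrite sqrtr_sqr.
Qed.

Lemma vnormN x : vnorm (- x) = vnorm x.
Proof. by rewrite -scaleN1r vnormZ normrN normr1 mul1r. Qed.

Lemma vnormB x y : vnorm (x - y) <= vnorm x + vnorm y.
Proof. by rewrite -(vnormN y) vnormD. Qed.

Lemma entry_le x i : `|x i 0| <= vnorm x.
Proof.
rewrite vnormE -sqrtr_sqr ler_sqrt ?nsq_ge0 // nsqE (bigD1 i) //=.
by rewrite lerDl sumr_ge0 // => j _; rewrite sqr_ge0.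
Qed.

Lemma mbound A : exists k, 0 <= k /\ forall x, vnorm (A *m x) <= k * vnorm x.
Proof.
set S := \sum_i \sum_j `|A i j|.
have S0 : 0 <= S by rewrite sumr_ge0 // => i _; rewrite sumr_ge0.
exists (Num.sqrt n%:R * S); split; first by rewrite mulr_ge0 ?sqrtr_ge0.
move=> x; set v := vnorm x.
have hv : 0 <= v by exact: vnorm_ge0.
have He : forall i, `|(A *m x) i 0| <= S * v.
  move=> i; rewrite mxE; apply: le_trans (ler_norm_sum _ _ _) _.
  apply: (@le_trans _ _ (\sum_j `|A i j| * v)).
    apply: ler_sum => j _; rewrite normrM ler_wpM2l //; exact: entry_le.
  rewrite -mulr_suml ler_wpM2r // /S [leRHS](bigD1 i) //= lerDl.
  by rewrite sumr_ge0 // => k _; rewrite sumr_ge0.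
have -> : Num.sqrt n%:R * S * v = Num.sqrt (n%:R * (S * v) ^+ 2).
  by rewrite sqrtrM ?ler0n // sqrtr_sqr ger0_norm ?mulr_ge0 // mulrA.
rewrite vnormE ler_sqrt ?mulr_ge0 ?ler0n ?sqr_ge0 // nsqE.
apply: (@le_trans _ _ (\sum_(i < n) (S * v) ^+ 2)).
  by apply: ler_sum => i _; apply: abs_le_sq.
by rewrite sumr_const card_ord mulr_natl.
Qed.

Definition spset A := [set vnorm (A *m x) | x in [set x : 'cV[R]_n | vnorm x <= 1]].

Lemma spset_ub A : has_ubound (spset A).
Proof.
have [k [k0 hk]] := mbound A; exists k => _ [x /= hx <-].
apply: le_trans (hk x) _; rewrite -[leRHS]mulr1 ler_wpM2l //.
Qed.

Lemma spnorm_ub A x : vnorm x <= 1 -> vnorm (A *m x) <= spnorm A.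
Proof. by move=> hx; apply: (ub_le_sup (spset_ub A)); exists x. Qed.

Lemma spnorm_ge0 A : 0 <= spnorm A.
Proof.
by apply: le_trans (spnorm_ub A (x := 0) _); rewrite ?mulmx0 vnorm0 // ler01.
Qed.

Lemma spnorm_bound A x : vnorm (A *m x) <= spnorm A * vnorm x.
Proof.
have [x0|xn0] := eqVneq (vnorm x) 0.
  by rewrite (vnorm_eq0 x0) mulmx0 vnorm0 mulr0.
have xp : 0 < vnorm x by rewrite lt_def xn0 vnorm_ge0.
have := spnorm_ub A (x := (vnorm x)^-1 *: x).
rewrite vnormZ -scalemxAr vnormZ ger0_norm ?invr_ge0 ?vnorm_ge0 //.
rewrite mulVf // lexx => /(_ isT).
by rewrite -(ler_pM2l xp) mulrA mulfV // mul1r mulrC.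
Qed.

Lemma spnorm_le A c : 0 <= c -> (forall x, vnorm (A *m x) <= c * vnorm x) ->
  spnorm A <= c.
Proof.
move=> c0 h; apply: ge_sup.
  by exists (vnorm (A *m 0)); exists 0 => //=; rewrite vnorm0 ler01.
move=> _ [x /= hx <-]; apply: le_trans (h x) _.
by rewrite -[leRHS]mulr1 ler_wpM2l.
Qed.

Lemma spnorm_tr A y : vnorm (A^T *m y) <= spnorm A * vnorm y.
Proof.
set a := A^T *m y.
have h : nsq a <= vnorm y * (spnorm A * vnorm a).
  rewrite {1}/nsq {1}/a dot_mull trmxK.
  apply: le_trans (CS _ _) _; rewrite ler_wpM2l ?vnorm_ge0 //.
  exact: spnorm_bound.
move: h; rewrite -sqr_vnorm mulrA (mulrC (vnorm y)).
have : 0 <= spnorm A * vnorm y by rewrite mulr_ge0 ?vnorm_ge0 ?spnorm_ge0.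
have := vnorm_ge0 a.
move: (spnorm A * vnorm y) (vnorm a) => w va; nra.
Qed.

End Vec.

Section Main.
Variable R : realType.
Variable n : nat.
Implicit Types (x y z : 'cV[R]_n) (A B C : 'M[R]_n).

Lemma quad_nsq B x : (x^T *m (B *m B^T) *m x) 0 0 = nsq (B^T *m x).
Proof. by rewrite /nsq /dot trmx_mul trmxK !mulmxA. Qed.

Lemma main_bound A C lam : A + C \in unitmx ->
  eigenvalue (invmx ((A + C) *m (A + C)^T) *m (A *m A^T + C *m C^T)) lam ->
  lam <= spnorm (invmx (A + C) *m A) ^+ 2 + (1 + spnorm (invmx (A + C) *m A)) ^+ 2.
Proof.
set P := A + C => uP.
set S := A *m A^T + C *m C^T.
have uPP : P *m P^T \in unitmx by rewrite unitmx_mul unitmx_tr uP.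
case/eigenvalueP => v Hv v0.
set w := v *m invmx (P *m P^T).
have vw : v = w *m (P *m P^T) by rewrite /w mulmxKV.
have w0 : w != 0.
  by apply: contraNneq v0 => w0; rewrite vw w0 mul0mx.
have Hw : w *m S = lam *: (w *m (P *m P^T)).
  by rewrite -vw -Hv mulmxA.
set x := w^T.
have x0 : x != 0 by apply: contraNneq w0 => h; rewrite -(trmxK w) -/x h linear0.
have E : (x^T *m S *m x) 0 0 = lam * (x^T *m (P *m P^T) *m x) 0 0.
  by rewrite /x trmxK Hw -scalemxAl mxE.
rewrite /S mulmxDr mulmxDl mxE !quad_nsq in E.
set a := A^T *m x in E; set c := C^T *m x in E; set y := P^T *m x in E.
set z := spnorm (invmx P *m A).
have ya : y = a + c by rewrite /y /a /c /P linearD /= mulmxDl.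
have aK : a = (invmx P *m A)^T *m y.
  rewrite /y trmx_mul -mulmxA (mulmxA (invmx P)^T) -trmx_mul mulmxV //.
  by rewrite trmx1 mul1mx.
have ha : vnorm a <= z * vnorm y by rewrite {1}aK spnorm_tr.
have hc : vnorm c <= vnorm y + vnorm a.
  have -> : c = y - a by rewrite ya addrC addKr.
  exact: vnormB.
have y0 : y != 0.
  apply: contraNneq x0 => h.
  by rewrite -(mulKmx (_ : P^T \in unitmx) x) ?unitmx_tr // -/y h mulmx0.
have yp := nsq_gt0 y0.
rewrite -(ler_pM2r yp) -E -!sqr_vnorm.
have := vnorm_ge0 a; have := vnorm_ge0 c; have := vnorm_ge0 y.
have := spnorm_ge0 (invmx P *m A); rewrite -/z.
move: ha hc; move: (vnorm a) (vnorm c) (vnorm y) z => va vc vy zz; nra.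
Qed.

End Main.

Section Dg.
Variable R : realType.
Variable n : nat.
Implicit Types (f g : 'I_n -> R) (A B X : 'M[R]_n).

Definition dg f : 'M[R]_n := diag_mx (\row_i f i).

Lemma dgE f i j : dg f i j = f i *+ (i == j).
Proof. by rewrite /dg !mxE. Qed.

Lemma dg_ext f g : (forall i, f i = g i) -> dg f = dg g.
Proof. by move=> h; apply/matrixP => i j; rewrite !dgE h. Qed.

Lemma dgM f g : dg f *m dg g = dg (fun i => f i * g i).
Proof. by rewrite /dg mulmx_diag; congr diag_mx; apply/matrixP => i j; rewrite !mxE. Qed.

Lemma dgC f g : dg f *m dg g = dg g *m dg f.
Proof. by rewrite !dgM; apply: dg_ext => i; rewrite mulrC. Qed.

Lemma dgT f : (dg f)^T = dg f.
Proof. exact: tr_diag_mx. Qed.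

Lemma dg1 : dg (fun _ => 1) = 1%:M.
Proof. by apply/matrixP => i j; rewrite dgE mxE. Qed.

Lemma dgD f g : dg f + dg g = dg (fun i => f i + g i).
Proof. by apply/matrixP => i j; rewrite !mxE mulrnDl. Qed.

Lemma dgN f : - dg f = dg (fun i => - f i).
Proof. by apply/matrixP => i j; rewrite !mxE mulNrn. Qed.

Lemma dgZ c f : c *: dg f = dg (fun i => c * f i).
Proof. by apply/matrixP => i j; rewrite !mxE mulrnAr. Qed.

Lemma msqrt_dg f : msqrt (dg f) = dg (fun i => Num.sqrt (f i)).
Proof.
apply/matrixP => i j; rewrite /msqrt !mxE; case: (i == j) => /=.
  by rewrite !mulr1n.
by rewrite !mulr0n sqrtr0.
Qed.

Lemma inv_of_mul A B : A *m B = 1%:M -> invmx A = B.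
Proof.
move=> h; have [uA _] := mulmx1_unit h.
by rewrite -[invmx A]mulmx1 -h mulmxA mulVmx // mul1mx.
Qed.

Lemma dg_inv f : (forall i, f i != 0) -> invmx (dg f) = dg (fun i => (f i)^-1).
Proof. by move=> h; apply: inv_of_mul; rewrite dgM -dg1; apply: dg_ext => i; rewrite mulfV. Qed.

Lemma invmxM A B : A \in unitmx -> B \in unitmx -> invmx (A *m B) = invmx B *m invmx A.
Proof.
move=> uA uB; apply: inv_of_mul.
by rewrite -mulmxA (mulmxA B) mulmxV // mul1mx mulmxV.
Qed.

Lemma diag_dg A : is_diag_mx A -> A = dg (fun i => A i i).
Proof.
move/is_diag_mxP => h; apply/matrixP => i j; rewrite dgE.
by case: (eqVneq i j) => [->|ij]; rewrite ?mulr1n // mulr0n h.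
Qed.

Lemma one_sub_dg c f : 1%:M - c *: dg f = dg (fun i => 1 - c * f i).
Proof. by rewrite dgZ -dg1 dgN dgD. Qed.

End Dg.

Section Case1.
Variable R : realType.
Variable n : nat.
Variables (nu : R) (m p : 'I_n -> R) (L : 'M[R]_n).
Hypothesis nu0 : 0 < nu.
Hypothesis m0 : forall i, 0 < m i.
Hypothesis p01 : forall i, p i = 0 \/ p i = 1.

Let s := Num.sqrt nu.
Let sm i := Num.sqrt (m i).
Let ism i := (Num.sqrt (m i))^-1.
Let q i := 1 - p i.

Lemma sm_neq0 i : sm i != 0.
Proof. by rewrite /sm sqrtr_eq0 -ltNge m0. Qed.
Lemma sm_sq i : sm i * sm i = m i.
Proof. by rewrite /sm -expr2 sqr_sqrtr // ltW. Qed.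
Lemma ism_sq i : ism i * ism i = (m i)^-1.
Proof. by rewrite /ism -invfM -/(sm i) sm_sq. Qed.
Lemma m_ism i : m i * ism i = sm i.
Proof. by rewrite -sm_sq /ism -/(sm i) -mulrA mulfV ?sm_neq0 // mulr1. Qed.
Lemma sqrt_q i : Num.sqrt (1 - 1 * p i) = q i.
Proof. by rewrite mul1r /q; case: (p01 i) => ->; rewrite ?subr0 ?subrr ?sqrtr1 ?sqrtr0. Qed.
Lemma q_sq i : q i * q i = q i.
Proof. by rewrite /q; case: (p01 i) => ->; rewrite ?subr0 ?subrr ?mulr1 ?mulr0. Qed.
Lemma p_sq i : p i * p i = p i.
Proof. by case: (p01 i) => ->; rewrite ?mulr1 ?mulr0. Qed.
Lemma s_sq : s * s = nu.
Proof. by rewrite /s -expr2 sqr_sqrtr // ltW. Qed.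
Lemma m_neq0 i : m i != 0.
Proof. by rewrite gt_eqF. Qed.

Lemma one_sub_dg1 (f : 'I_n -> R) : 1%:M - dg f = dg (fun i : 'I_n => 1 - f i).
Proof. by rewrite -dg1 dgN dgD. Qed.

Lemma g1_10 : gamma1 nu 1 0 = 0.
Proof. by rewrite /gamma1 expr0n /= !mul0r. Qed.
Lemma g2_10 : gamma2 nu 1 0 = 1.
Proof. by rewrite /gamma2 expr0n /= mul0r add0r expr1n divr1. Qed.

Lemma L1_10 : L1 nu (dg m) L (dg p) 1 0 = s *: L + dg q *m dg m.
Proof.
rewrite /L1 g1_10 g2_10 !one_sub_dg !msqrt_dg.
rewrite (dg_ext (g := fun _ => 1)); last by move=> i; rewrite mul0r subr0 sqrtr1.
rewrite dg1 mulmx1 (dg_ext (g := q)) //; exact: sqrt_q.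
Qed.

Definition A1 := s *: L *m dg ism.
Definition C1 := dg (fun i => q i * sm i).

Lemma AC1 : A1 + C1 = L1 nu (dg m) L (dg p) 1 0 *m dg ism.
Proof.
rewrite L1_10 mulmxDl /A1 /C1 -mulmxA !dgM; congr (_ + _).
by apply: dg_ext => i; rewrite m_ism.
Qed.

Lemma Shat1 : Shat nu (dg m) L (dg p) 1 0 = (A1 + C1) *m (A1 + C1)^T.
Proof.
rewrite AC1 trmx_mul dgT /Shat; set l := L1 _ _ _ _ _ _.
rewrite !mulmxA -(mulmxA l (dg ism)) dgM.
rewrite dg_inv; last exact: m_neq0.
by congr (_ *m _ *m _); apply: dg_ext => i; rewrite ism_sq.
Qed.

Lemma Sk1 : Sk nu (dg m) L (dg p) 1 0 = A1 *m A1^T + C1 *m C1^T.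
Proof.
rewrite /Sk /A1 /C1 expr0n /= !mul0r scale0r sub0r expr1n add0r invr1 scale1r.
rewrite mulNmx mul1mx linearN /= tr_scalar_mx mulmxN mulmx1 !mulNmx opprK !dgM.
rewrite dg_inv; last exact: m_neq0.
rewrite trmx_mul dgT !linearZ /= -!scalemxAl scalerA s_sq dgT !mulmxA dgM.
rewrite -(mulmxA L (dg ism)) dgM.
rewrite (dg_ext (f := fun i => ism i * ism i) (g := fun i => (m i)^-1)); last exact: ism_sq.
rewrite -addrA; congr (_ + _).
rewrite dgN dgD; apply: dg_ext => i.
rewrite /q -(sm_sq i); case: (p01 i) => ->; ring.
Qed.

Lemma zeta1_eq : L1 nu (dg m) L (dg p) 1 0 \in unitmx ->
  zeta1 nu (dg m) L (dg p) = spnorm (invmx (A1 + C1) *m A1).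
Proof.
move=> uL1; rewrite AC1 /zeta1 /A1 one_sub_dg1 dgC -L1_10.
have ui : dg ism \in unitmx.
  have h : dg ism *m dg sm = 1%:M.
    by rewrite dgM -dg1; apply: dg_ext => i; rewrite mulVf ?sm_neq0.
  by case: (mulmx1_unit h).
rewrite (invmxM uL1 ui) msqrt_dg.
have e1 : invmx (dg ism) = dg (fun i => Num.sqrt (m i)).
  by rewrite dg_inv => [|i]; [apply: dg_ext => i; rewrite /ism invrK | rewrite invr_eq0 sm_neq0].
have e2 : invmx (dg (fun i => Num.sqrt (m i))) = dg ism.
  by rewrite dg_inv // => i; exact: sm_neq0.
rewrite e1 e2 !mulmxA.
by [].
Qed.


Lemma g1_01 : gamma1 nu 0 1 = 1.
Proof. by rewrite /gamma1 expr0n /= addr0 expr1n mul1r divff // gt_eqF. Qed.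
Lemma g2_01 : gamma2 nu 0 1 = 0.
Proof. by rewrite /gamma2 expr0n /= mul0r. Qed.

Lemma L1_01 : L1 nu (dg m) L (dg p) 0 1 = s *: L *m dg q + dg m.
Proof.
rewrite /L1 g1_01 g2_01 !one_sub_dg !msqrt_dg.
rewrite (dg_ext (f := fun i => Num.sqrt (1 - 0 * p i)) (g := fun _ => 1)); last by move=> i; rewrite mul0r subr0 sqrtr1.
rewrite dg1 mul1mx (dg_ext (g := q)) //; exact: sqrt_q.
Qed.

Lemma trZ (c : R) (Y : 'M[R]_n) : (c *: Y)^T = c *: Y^T.
Proof. by apply/matrixP => i j; rewrite !mxE. Qed.

Lemma dgMA f g (Y : 'M[R]_n) : dg f *m (dg g *m Y) = dg (fun i => f i * g i) *m Y.
Proof. by rewrite mulmxA dgM. Qed.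

Definition A2 := s *: L *m dg q *m dg ism.
Definition C2 := dg sm.

Lemma AC2 : C2 + A2 = L1 nu (dg m) L (dg p) 0 1 *m dg ism.
Proof.
rewrite L1_01 mulmxDl /A2 /C2 addrC dgM; congr (_ + _).
by apply: dg_ext => i; rewrite m_ism.
Qed.

Lemma Shat_fact (l : 'M[R]_n) : l *m invmx (dg m) *m l^T = (l *m dg ism) *m (l *m dg ism)^T.
Proof.
rewrite trmx_mul dgT !mulmxA -(mulmxA l (dg ism)) dgM.
rewrite dg_inv; last exact: m_neq0.
by congr (_ *m _ *m _); apply: dg_ext => i; rewrite ism_sq.
Qed.

Lemma Shat2 : Shat nu (dg m) L (dg p) 0 1 = (C2 + A2) *m (C2 + A2)^T.
Proof. by rewrite AC2 /Shat Shat_fact. Qed.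

Lemma scalar0 : (0 : R)%:M = 0 :> 'M[R]_n.
Proof. by apply/matrixP => i j; rewrite !mxE mul0rn. Qed.

Lemma Sk2 : Sk nu (dg m) L (dg p) 0 1 = C2 *m C2^T + A2 *m A2^T.
Proof.
rewrite /Sk /A2 /C2 expr0n /= addr0 expr1n !mul1r scalar0 subr0.
rewrite dg_inv; last exact: m_neq0.
set X := L *m dg (fun i => (m i)^-1).
have eT : (nu *: X) *m dg p *m dg m *m dg p *m (nu *: X)^T =
   (nu * nu) *: (L *m dg (fun i => (m i)^-1 * p i * m i * p i * (m i)^-1) *m L^T).
  rewrite linearZ /= -!scalemxAl -scalemxAr scalerA; congr (_ *: _).
  rewrite /X trmx_mul dgT !mulmxA.
  by rewrite -!mulmxA !dgMA.
have eA : (s *: L *m dg q *m dg ism) *m (s *: L *m dg q *m dg ism)^T =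
   nu *: (L *m dg (fun i => q i * ism i * ism i * q i) *m L^T).
  rewrite -!scalemxAl linearZ /= -scalemxAr scalerA s_sq; congr (_ *: _).
  rewrite !trmx_mul !dgT !mulmxA.
  by rewrite -!mulmxA !dgMA.
rewrite eT eA scalerA mulrA mulVf ?gt_eqF // mul1r dgT dgM addrAC [RHS]addrC.
congr (_ + _); last by apply: dg_ext => i; rewrite sm_sq.
rewrite /X -scalerBr -mulmxBl -mulmxBr dgN dgD; congr (_ *: (_ *m _ *m _)).
apply: dg_ext => i.
have e : ism i = (sm i)^-1 by [].
rewrite e /q -(sm_sq i); case: (p01 i) => ->; field; exact: sm_neq0.
Qed.

Lemma sm_ism : dg sm *m dg ism = 1%:M.
Proof. by rewrite dgM -dg1; apply: dg_ext => i; rewrite mulfV ?sm_neq0. Qed.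

Definition E2 : 'M[R]_n := 1%:M + s *: (dg ism *m L *m dg ism) *m dg q.

Lemma AC2' : C2 + A2 = dg sm *m E2.
Proof.
rewrite /E2 mulmxDr mulmx1 /C2 /A2; congr (_ + _).
rewrite -!scalemxAl -scalemxAr; congr (_ *: _).
by rewrite !mulmxA sm_ism mul1mx -!mulmxA dgC.
Qed.

Lemma zeta2_eq : C2 + A2 \in unitmx ->
  zeta2 nu (dg m) L (dg p) = spnorm (invmx (C2 + A2) *m C2).
Proof.
move=> u.
have usm : dg sm \in unitmx.
  have h : dg sm *m dg ism = 1%:M.
    by rewrite dgM -dg1; apply: dg_ext => i; rewrite mulfV ?sm_neq0.
  by case: (mulmx1_unit h).
have uE : E2 \in unitmx by move: u; rewrite AC2' unitmx_mul => /andP[].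
rewrite AC2' (invmxM usm uE) /C2 mulmxKV // /zeta2 /E2 one_sub_dg1 msqrt_dg.
have e2 : invmx (dg (fun i => Num.sqrt (m i))) = dg ism.
  by rewrite dg_inv // => i; exact: sm_neq0.
by rewrite e2.
Qed.

End Case1.

Section Lim.
Variable R : realType.
Variable n : nat.

Lemma ker_unit (A : 'M[R]_n) : (forall x : 'cV[R]_n, A *m x = 0 -> x = 0) -> A \in unitmx.
Proof.
move=> h; rewrite -unitmx_tr -row_free_unit; apply: inj_row_free => v hv.
have : A *m v^T = 0 by rewrite -(trmxK (A *m v^T)) trmx_mul trmxK hv linear0.
by move/h => e; rewrite -(trmxK v) e linear0.
Qed.

Lemma cvg_from_eps (f : R -> R) (l : R) :
  (forall eps : R, 0 < eps -> exists2 d : R, 0 < d & forall t, 0 < t -> t < d -> `|l - f t| < eps) ->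
  f x @[x --> (0:R)^'+] --> l.
Proof.
move=> H; apply/cvgrPdist_lt => eps e0.
have [d d0 hd] := H eps e0.
near=> t.
apply: hd.
  by near: t; exact: nbhs_right_gt.
by near: t; exact: nbhs_right_lt.
Unshelve. all: by end_near.
Qed.

Lemma E_bounds (G : 'M[R]_n) (k a : R) : 0 <= k -> (forall x, vnorm (G *m x) <= k * vnorm x) ->
  0 <= a -> a * k <= 1/2 ->
  forall y, vnorm y <= vnorm ((1%:M + a *: G) *m y) + a * k * vnorm y /\
            vnorm ((1%:M + a *: G) *m y) <= vnorm y + a * k * vnorm y.
Proof.
move=> k0 hk a0 ak y.
have e : (1%:M + a *: G) *m y = y + a *: (G *m y) by rewrite mulmxDl mul1mx -scalemxAl.
have hG : vnorm (a *: (G *m y)) <= a * k * vnorm y.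
  by rewrite vnormZ ger0_norm // -mulrA ler_wpM2l.
rewrite e; split.
  have hy : vnorm y <= vnorm (y + a *: (G *m y)) + vnorm (a *: (G *m y)).
    by rewrite -{1}(addrK (a *: (G *m y)) y); exact: vnormB.
  by apply: le_trans hy _; rewrite lerD2l.
by apply: le_trans (vnormD _ _) _; rewrite lerD2l.
Qed.

Lemma lim_inv (G : 'M[R]_n) : (0 < n)%N ->
  (fun t => spnorm (invmx (1%:M + Num.sqrt t *: G))) @ (0:R)^'+ --> (1:R).
Proof.
move=> n0.
have [k [k0 hk]] := mbound G.
apply: cvg_from_eps => eps e0.
set c := eps / (4 + 2 * eps).
have d0 : 0 < 4 + 2 * eps by lra.
have c0 : 0 < c by rewrite divr_gt0.
have c1 : c <= 1/2 by rewrite ler_pdivrMr //; lra.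
have c2 : c <= eps/4 by rewrite ler_pdivrMr //; nra.
have k1 : 0 < k + 1 by rewrite ltr_wpDl.
exists ((c / (k + 1)) ^+ 2); first by rewrite exprn_gt0 // divr_gt0.
move=> t t0 td.
set a := Num.sqrt t.
have a0 : 0 <= a by exact: sqrtr_ge0.
have dpos : 0 < c / (k + 1) by rewrite divr_gt0.
have ac : a < c / (k + 1).
  have -> : c / (k + 1) = Num.sqrt ((c / (k + 1)) ^+ 2) by rewrite sqrtr_sqr ger0_norm // ltW.
  by rewrite ltr_sqrt // exprn_gt0.
have akc : a * k <= c.
  have : a * (k + 1) < c by rewrite -ltr_pdivlMr.
  nra.
have ak : a * k <= 1/2 by apply: le_trans c1.
have ak0 : 0 <= a * k by rewrite mulr_ge0.
have hb := E_bounds k0 hk a0 ak.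
set E := 1%:M + a *: G.
have uE : E \in unitmx.
  apply: ker_unit => y hy; have [h1 _] := hb y; rewrite -/E hy vnorm0 add0r in h1.
  apply: vnorm_eq0; have := vnorm_ge0 y; nra.
have up : spnorm (invmx E) <= (1 - a * k)^-1.
  apply: spnorm_le => [|x]; first by rewrite invr_ge0; lra.
  have [h1 _] := hb (invmx E *m x); rewrite -/E mulmxA mulmxV // mul1mx in h1.
  rewrite mulrC ler_pdivlMr; last by lra.
  have := vnorm_ge0 (invmx E *m x); nra.
pose e1 : 'cV[R]_n := \col_i (i == Ordinal n0)%:R.
have ve1 : vnorm e1 = 1.
  rewrite vnormE nsqE (bigD1 (Ordinal n0)) //= big1 => [|i ni].
    by rewrite mxE eqxx expr1n addr0 sqrtr1.
  by rewrite mxE (negPf ni) expr0n.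
have lo : (1 + a * k)^-1 <= spnorm (invmx E).
  apply: le_trans (spnorm_ub (invmx E) (x := e1) _); last by rewrite ve1.
  have [_ h2] := hb (invmx E *m e1); rewrite -/E mulmxA mulmxV // mul1mx ve1 in h2.
  set yv := vnorm (invmx E *m e1) in h2 *.
  have hv := vnorm_ge0 (invmx E *m e1); rewrite -/yv in hv.
  have hinv : (1 + a * k) * (1 + a * k)^-1 = 1 by rewrite mulfV // gt_eqF //; lra.
  have : 0 <= (1 + a * k)^-1 by rewrite invr_ge0; lra.
  move: hinv h2 hv ak0; move: (1 + a * k)^-1 (a * k) yv => iv b yy h1 h2 h3 h4 h5; nra.
have hinv : (1 - a * k) * (1 - a * k)^-1 = 1 by rewrite mulfV // gt_eqF //; lra.
have hinv2 : (1 + a * k) * (1 + a * k)^-1 = 1 by rewrite mulfV // gt_eqF //; lra.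
have hz := spnorm_ge0 (invmx E).
have hiv0 : 0 <= (1 - a * k)^-1 by rewrite invr_ge0; lra.
have hjv0 : 0 <= (1 + a * k)^-1 by rewrite invr_ge0; lra.
set b := a * k in up lo hinv hinv2 ak0 ak akc hiv0 hjv0 *.
set iv := (1 - b)^-1 in up hinv hiv0 *.
set jv := (1 + b)^-1 in lo hinv2 hjv0 *.
set z := spnorm (invmx E) in up lo hz *.
have hh : 0 <= (1/2 - b) * iv by rewrite mulr_ge0 //; lra.
have hiv : iv <= 2 by nra.
have hh2 : 0 <= b * jv by rewrite mulr_ge0.
have hjv : jv <= 1 by nra.
have hh3 : b * iv <= b * 2 by rewrite ler_wpM2l.
have hh4 : b * jv <= b by rewrite -[leRHS]mulr1 ler_wpM2l.
rewrite ltr_norml; apply/andP; split; nra.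
Qed.
End Lim.

Section Bnd.
Variable R : realType.
Variable n : nat.
Variables (m p : 'I_n -> R) (L : 'M[R]_n).
Hypothesis m0 : forall i, 0 < m i.
Hypothesis p01 : forall i, p i = 0 \/ p i = 1.
Hypothesis pd : posdef (L + L^T).

Let q i := 1 - p i.
Let D := dg (fun i => m i * q i).
Let Dh := dg (fun i => Num.sqrt (m i * q i)).
Let P := dg p.
Let Q := dg q.

Lemma quadE (A : 'M[R]_n) x : (x^T *m A *m x) 0 0 = dot x (A *m x).
Proof. by rewrite /dot mulmxA. Qed.

Lemma LLT_pos x : x != 0 -> 0 < dot x (L *m x).
Proof.
move=> x0; have := pd x0; rewrite quadE mulmxDl dotDr.
have -> : dot x (L^T *m x) = dot x (L *m x) by rewrite -dot_mull dotC.
lra.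
Qed.

Lemma L_ge0 x : 0 <= dot x (L *m x).
Proof.
have [->|x0] := eqVneq x 0; first by rewrite dot0l.
exact/ltW/LLT_pos.
Qed.

Lemma L_eq0 x : dot x (L *m x) = 0 -> x = 0.
Proof.
move=> h; apply/eqP; apply/negPn/negP => x0.
by have := LLT_pos x0; rewrite h ltxx.
Qed.

Lemma q01 i : q i = 0 \/ q i = 1.
Proof. by rewrite /q; case: (p01 i) => ->; [right; rewrite subr0 | left; rewrite subrr]. Qed.

Lemma DhDh : Dh *m Dh = D.
Proof.
rewrite /Dh /D dgM; apply: dg_ext => i.
have hq : 0 <= q i by case: (q01 i) => ->; rewrite ?lexx ?ler01.
by rewrite -expr2 sqr_sqrtr // mulr_ge0 // ltW.
Qed.

Lemma dotD x y : dot x (D *m y) = dot (Dh *m x) (Dh *m y).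
Proof. by rewrite dot_mull dgT mulmxA DhDh. Qed.

Lemma PD : P *m D = 0.
Proof.
rewrite /P /D dgM; apply/matrixP => i j; rewrite dgE !mxE /q.
by case: (p01 i) => ->; rewrite ?mul0r ?mul0rn // subrr mulr0 mulr0 mul0rn.
Qed.

Lemma PP : P *m P = P.
Proof. by rewrite /P dgM; apply: dg_ext => i; case: (p01 i) => ->; rewrite ?mulr0 ?mulr1. Qed.
Lemma QP : Q *m P = 0.
Proof.
rewrite /P /Q dgM; apply/matrixP => i j; rewrite dgE !mxE /q.
by case: (p01 i) => ->; rewrite ?mulr0 ?mul0rn // subrr mul0r mul0rn.
Qed.
Lemma PQ : P *m Q = 0.
Proof. by rewrite /P /Q dgC QP. Qed.
Lemma QQ : Q *m Q = Q.
Proof. by rewrite /Q dgM; apply: dg_ext => i; case: (q01 i) => ->; rewrite ?mulr0 ?mulr1. Qed.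
Lemma QpP : Q + P = 1%:M.
Proof. by rewrite /Q /P dgD -dg1; apply: dg_ext => i; rewrite /q subrK. Qed.

Lemma N_unit s : 0 < s -> (s *: L + D) \in unitmx.
Proof.
move=> s0; apply: ker_unit => y hy.
have : dot y ((s *: L + D) *m y) = 0 by rewrite hy dot0r.
rewrite mulmxDl dotDr -scalemxAl dotZr dotD -/(nsq _).
have := L_ge0 y; have := nsq_ge0 (Dh *m y) => h1 h2 h3.
apply: L_eq0; nra.
Qed.

Let G := P *m L *m P + Q.

Lemma G_unit : G \in unitmx.
Proof.
apply: ker_unit => y hy.
have hQ : Q *m y = 0.
  have : Q *m (G *m y) = 0 by rewrite hy mulmx0.
  by rewrite mulmxA /G mulmxDr QQ !mulmxA QP !mul0mx add0r.
have hP : P *m L *m P *m y = 0.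
  have : P *m (G *m y) = 0 by rewrite hy mulmx0.
  by rewrite mulmxA /G mulmxDr PQ addr0 !mulmxA PP.
have ey : y = P *m y by rewrite -{1}(mul1mx y) -QpP mulmxDl hQ add0r.
apply: L_eq0.
rewrite {1 2}ey mulmxA (dot_mull P) /P dgT -/P !mulmxA hP dot0r.
by [].
Qed.

Lemma key_bound : exists C, 0 <= C /\ forall s, 0 < s -> forall w,
  vnorm (invmx (s *: L + D) *m (s *: L *m w)) <= C * vnorm w.
Proof.
have [kD [kD0 hkD]] := mbound Dh.
set g1 := fun i => q i * (Num.sqrt (m i))^-1.
have [kg [kg0 hkg]] := mbound (dg g1).
have [k3 [k30 hk3]] := mbound (invmx G *m P *m L).
have Qf : Q = dg g1 *m Dh.
  rewrite /Q /g1 /Dh dgM; apply: dg_ext => i.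
  case: (q01 i) => ->; first by rewrite !mul0r.
  rewrite !mul1r mulr1 mulVf // sqrtr_eq0 -ltNge; exact: m0.
exists (1 + (1 + k3) * (kg * kD)); split.
  by rewrite addr_ge0 // mulr_ge0 ?mulr_ge0 // addr_ge0.
move=> s s0 w.
set N := s *: L + D.
have uN := N_unit s0; rewrite -/N in uN.
set z := invmx N *m (D *m w).
have Nz : N *m z = D *m w by rewrite /z mulKVmx.
have er : invmx N *m (s *: L *m w) = w - z.
  have -> : s *: L *m w = N *m w - D *m w by rewrite /N mulmxDl addrK.
  by rewrite mulmxBr mulKmx.
rewrite er; clearbody z.
have en : dot z (N *m z) = dot z (D *m w) by rewrite Nz.
rewrite /N mulmxDl dotDr -scalemxAl dotZr !dotD -/(nsq _) in en.
have hDz : vnorm (Dh *m z) <= vnorm (Dh *m w).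
  have h1 := L_ge0 z.
  have h2 := CS (Dh *m z) (Dh *m w).
  have : nsq (Dh *m z) <= vnorm (Dh *m z) * vnorm (Dh *m w).
    have : 0 <= s * dot z (L *m z) by rewrite mulr_ge0 // ltW.
    lra.
  rewrite -sqr_vnorm; have := vnorm_ge0 (Dh *m z); have := vnorm_ge0 (Dh *m w).
  move: (vnorm (Dh *m z)) (vnorm (Dh *m w)) => a b ha hb hab; nra.
set u := Q *m z.
have hu : vnorm u <= kg * kD * vnorm w.
  rewrite /u Qf -mulmxA; apply: le_trans (hkg _) _.
  rewrite -mulrA ler_wpM2l //; apply: le_trans hDz _; exact: hkD.
have PLz : P *m L *m z = 0.
  have : P *m (N *m z) = 0 by rewrite Nz mulmxA PD mul0mx.
  rewrite /N mulmxDl mulmxDr -scalemxAl -scalemxAr !mulmxA PD !mul0mx addr0.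
  by move/eqP; rewrite scaler_eq0 gt_eqF //= => /eqP.
set v := P *m z.
have zuv : z = u + v by rewrite /u /v -mulmxDl QpP mul1mx.
have hvu : P *m L *m v = - (P *m L *m u).
  have h0 := PLz; rewrite zuv mulmxDr in h0.
  by apply/eqP; rewrite -addr_eq0 addrC h0.
have Gv : G *m v = - (P *m L *m u).
  rewrite /G /v mulmxDl !mulmxA -(mulmxA (P *m L) P P) PP QP mul0mx addr0.
  by rewrite -mulmxA -/v hvu /u mulmxA.
have hv : vnorm v <= k3 * vnorm u.
  have -> : v = - (invmx G *m P *m L *m u).
    by rewrite -(mulKmx G_unit v) Gv mulmxN !mulmxA.
  rewrite vnormN; exact: hk3.
have hz : vnorm z <= (1 + k3) * (kg * kD) * vnorm w.
  rewrite zuv; apply: le_trans (vnormD _ _) _.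
  apply: (@le_trans _ _ ((1 + k3) * vnorm u)).
    by rewrite mulrDl mul1r lerD2l.
  by rewrite -mulrA ler_wpM2l // addr_ge0.
apply: le_trans (vnormB _ _) _.
by rewrite mulrDl mul1r lerD2l.
Qed.

Lemma zeta1_bnd : exists C, forall nu', 0 < nu' -> zeta1 nu' (dg m) L (dg p) <= C.
Proof.
have [C [C0 hC]] := key_bound.
set sm := fun i => Num.sqrt (m i).
set ism := fun i => (Num.sqrt (m i))^-1.
have [k1 [k10 hk1]] := mbound (dg sm).
have [k2 [k20 hk2]] := mbound (dg ism).
exists (k1 * C * k2) => nu' nu0.
have eD : dg m *m (1%:M - dg p) = D.
  rewrite -dg1 dgN dgD dgM; apply: dg_ext => i; by [].
have e2 : invmx (dg sm) = dg ism.
  rewrite dg_inv // => i; rewrite sqrtr_eq0 -ltNge; exact: m0.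
rewrite /zeta1 eD msqrt_dg -/sm e2.
apply: spnorm_le => [|x]; first by rewrite !mulr_ge0.
rewrite -!mulmxA; apply: le_trans (hk1 _) _.
rewrite -!mulrA ler_wpM2l //; apply: le_trans (hC _ _ _) _.
  by rewrite sqrtr_gt0.
by rewrite ler_wpM2l.
Qed.

End Bnd.

Unset Implicit Arguments. Set Strict Implicit.

Theorem proposition4p7 (R : realType) (n : nat) (nu : R) (M L Pi : 'M[R]_n) :
  (0 < n)%N -> 0 < nu ->
  is_diag_mx M -> (forall i, 0 < M i i) ->
  L \in unitmx ->
  is_diag_mx Pi -> (forall i, Pi i i = 0 \/ Pi i i = 1) ->
  [/\ (* case (i): (alpha_u, alpha_y) = (1, 0) *)
      (Shat nu M L Pi 1 0 \in unitmx ->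
       forall lam : R,
         eigenvalue (invmx (Shat nu M L Pi 1 0) *m Sk nu M L Pi 1 0) lam ->
         lam <= zeta1 nu M L Pi ^+ 2 + (1 + zeta1 nu M L Pi) ^+ 2),
      (posdef (L + L^T) ->
       exists C : R, \forall nu' \near (0 : R)^'+, zeta1 nu' M L Pi <= C),
      (* case (ii): (alpha_u, alpha_y) = (0, 1) *)
      (Shat nu M L Pi 0 1 \in unitmx ->
       forall lam : R,
         eigenvalue (invmx (Shat nu M L Pi 0 1) *m Sk nu M L Pi 0 1) lam ->
         lam <= zeta2 nu M L Pi ^+ 2 + (1 + zeta2 nu M L Pi) ^+ 2) &
      (fun nu' : R => zeta2 nu' M L Pi) @ (0 : R)^'+ --> (1 : R)].
Proof.
move=> n0 nu0 dM Mpos uL dP P01.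
have [m eM hm] : exists2 m : 'I_n -> R, M = dg m & forall i, 0 < m i.
  by exists (fun i => M i i) => //; exact: diag_dg.
have [p eP hp] : exists2 p : 'I_n -> R, Pi = dg p & forall i, p i = 0 \/ p i = 1.
  by exists (fun i => Pi i i) => //; exact: diag_dg.
subst M Pi; split.
- move=> uS lam; rewrite (Shat1 nu L hm hp) (Sk1 L nu0 hm hp) => hl.
  move: uS; rewrite (Shat1 nu L hm hp) unitmx_mul => /andP[uAC _].
  rewrite zeta1_eq //; first exact: main_bound.
  by move: uAC; rewrite (AC1 nu L hm hp) unitmx_mul => /andP[].
- move=> pd; have [C hC] := zeta1_bnd hm hp pd.
  exists C; near=> nu'; apply: hC.
  by near: nu'; exact: nbhs_right_gt.
- move=> uS lam; rewrite (Shat2 L nu0 hm hp) (Sk2 L nu0 hm hp) => hl.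
  move: uS; rewrite (Shat2 L nu0 hm hp) unitmx_mul => /andP[uAC _].
  rewrite zeta2_eq //; exact: main_bound.
- set G := invmx (msqrt (dg m)) *m L *m invmx (msqrt (dg m)) *m (1%:M - dg p).
  have -> : (fun nu' : R => zeta2 nu' (dg m) L (dg p)) =
            (fun t => spnorm (invmx (1%:M + Num.sqrt t *: G))).
    by apply/funext => t; rewrite /zeta2 -scalemxAl.
  exact: lim_inv.
Unshelve. all: by end_near.
Qed.
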